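(* Let $L\neq0$, $\ell=(L^2)^{1/3}$, and $h<-\frac32\ell$. Then the cubic $f(u)=u^3+2hu^2+2(c+1)u-L^2$ has three distinct positive real roots $0<u_1<u_2<u_3$ if and only if $c\in(C_{1,\xi}(h),C_{2,\xi}(h))$.
   Context: For $h<-\frac32\ell$, let $s_1\in(0,\ell)$ and $s_2\in(\ell,\infty)$ be the unique numbers with $2s_i+L^2/s_i^2=-2h$; then $C_{1,\xi}(h)$ and $C_{2,\xi}(h)$ are defined by $(s_i+2L^2/s_i^2)s_i=2(C_{i,\xi}(h)+1)$, $i=1,2$. (In the spatial Stark problem, three distinct positive roots of $f$ means that the parabolic coordinate $\xi$ has a non-constant periodic motion, $\xi^2$ oscillating between $u_1$ and $u_2$.) *)

(* Defs.v *)
From Stdlib Require Import Reals Lra.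
Open Scope R_scope.

Definition ell (L : R) : R := Rpower (L ^ 2) (1 / 3).

Definition fcubic (L h c u : R) : R := u ^ 3 + 2 * h * u ^ 2 + 2 * (c + 1) * u - L ^ 2.

Definition s_eq (L h s : R) : Prop := 2 * s + L ^ 2 / s ^ 2 = - 2 * h.

Definition Cxi_of (L s : R) : R := (s + 2 * L ^ 2 / s ^ 2) * s / 2 - 1.

Definition three_distinct_pos_roots (L h c : R) : Prop :=
  exists u1 u2 u3 : R, 0 < u1 /\ u1 < u2 /\ u2 < u3 /\
    fcubic L h c u1 = 0 /\ fcubic L h c u2 = 0 /\ fcubic L h c u3 = 0.

(* Main.v *)
Require Import Defs.
From Stdlib Require Import Reals Lra Psatz.
Open Scope R_scope.

Lemma key_s (L h c s : R) : 0 < s -> s_eq L h s ->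
  fcubic L h c s = 2*s*(c - Cxi_of L s) /\ 2*s^3+2*h*s^2+L^2 = 0.
Proof.
  intros Hs He. unfold s_eq in He. unfold fcubic, Cxi_of.
  assert (Ht : L^2 = (L^2/s^2)*s^2) by (field; lra).
  set (t := L^2/s^2) in *.
  rewrite Ht. split.
  - replace (2*h) with (-(2*s+t)) by lra. field. lra.
  - replace (2*h) with (-(2*s+t)) by lra. ring.
Qed.

Lemma pfact (L h s1 s2 : R) : L <> 0 -> 0 < s1 -> s1 < s2 ->
  2*s1^3+2*h*s1^2+L^2 = 0 -> 2*s2^3+2*h*s2^2+L^2 = 0 ->
  0 < s1+s2+h /\ forall u, 2*u^3+2*h*u^2+L^2 = 2*(u-s1)*(u-s2)*(u+s1+s2+h).
Proof.
  intros HL H1 H12 P1 P2.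
  assert (Hq2 : 2*(s2^2+s2*s1+s1^2)+2*h*(s2+s1) = 0).
  { assert (E : (s2 - s1) * (2*(s2^2+s2*s1+s1^2)+2*h*(s2+s1)) =
       (2*s2^3+2*h*s2^2+L^2) - (2*s1^3+2*h*s1^2+L^2)) by ring.
    rewrite P1, P2 in E.
    destruct (Rmult_integral _ _ (eq_trans E (Rminus_diag 0))) as [E1|E1]; [lra|exact E1]. }
  assert (F : forall u, 2*u^3+2*h*u^2+L^2 = 2*(u-s1)*(u-s2)*(u+s1+s2+h)).
  { intro u.
    assert (E : 2*u^3+2*h*u^2+L^2 = (u-s1)*(2*(u^2+u*s1+s1^2)+2*h*(u+s1)) + (2*s1^3+2*h*s1^2+L^2)) by ring.
    rewrite P1 in E. rewrite E.
    assert (E2 : 2*(u^2+u*s1+s1^2)+2*h*(u+s1) = (2*(u^2+u*s1+s1^2)+2*h*(u+s1)) - (2*(s2^2+s2*s1+s1^2)+2*h*(s2+s1))) by lra.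
    rewrite E2. ring. }
  split; [|exact F].
  specialize (F 0).
  assert (HL2 : 0 < L^2) by (replace (L^2) with (Rsqr L) by (unfold Rsqr; ring); apply Rsqr_pos_lt; exact HL).
  assert (E : L^2 = 2*s1*s2*(s1+s2+h)) by (replace (2*0^3+2*h*0^2+L^2) with (L^2) in F by ring; rewrite F; ring).
  destruct (Rle_or_lt (s1+s2+h) 0) as [Hn|Hp]; [|exact Hp].
  exfalso. assert (0 < s1*s2) by nra. nra.
Qed.

Lemma fcont (L h c : R) : continuity (fun u => fcubic L h c u).
Proof. unfold fcubic. reg. Qed.

Lemma ivt_up (f : R -> R) x y : continuity f -> x < y -> f x < 0 -> 0 < f y ->
  exists z, x < z < y /\ f z = 0.
Proof.
  intros Hc Hxy Hx Hy. destruct (IVT f x y Hc Hxy Hx Hy) as [z [[Hz1 Hz2] Hz]].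
  exists z. split; [split|exact Hz].
  - destruct Hz1 as [|E]; [assumption| subst; lra].
  - destruct Hz2 as [|E]; [assumption| subst; lra].
Qed.

Lemma ivt_down (f : R -> R) x y : continuity f -> x < y -> 0 < f x -> f y < 0 ->
  exists z, x < z < y /\ f z = 0.
Proof.
  intros Hc Hxy Hx Hy.
  destruct (ivt_up (fun u => - f u) x y) as [z [Hz E]]; try lra.
  - apply continuity_opp; exact Hc.
  - exists z. split; [exact Hz| lra].
Qed.

Theorem proposition5p2 (L h s1 s2 c : R) :
  L <> 0 ->
  h < - (3 / 2) * ell L ->
  0 < s1 < ell L -> s_eq L h s1 ->
  ell L < s2 -> s_eq L h s2 ->
  (three_distinct_pos_roots L h c <->
   Cxi_of L s1 < c < Cxi_of L s2).
Proof.
  intros HL _ [Hs1 Hs1l] E1 Hs2l E2.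
  assert (H12 : s1 < s2) by lra.
  assert (Hs2 : 0 < s2) by lra.
  destruct (key_s L h c s1 Hs1 E1) as [F1 P1].
  destruct (key_s L h c s2 Hs2 E2) as [F2 P2].
  destruct (pfact L h s1 s2 HL Hs1 H12 P1 P2) as [Hpos PF].
  assert (HL2 : 0 < L^2) by (replace (L^2) with (Rsqr L) by (unfold Rsqr; ring); apply Rsqr_pos_lt; exact HL).
  split.
  - intros (u1 & u2 & u3 & Hu1 & H12' & H23 & R1 & R2 & R3).
    unfold fcubic in R1, R2, R3.
    set (k := 2*(c+1)) in *.
    assert (D12 : u1^2+u1*u2+u2^2 + 2*h*(u1+u2) + k = 0).
    { assert (E : (u2-u1)*(u1^2+u1*u2+u2^2 + 2*h*(u1+u2) + k) = 0).
      { replace 0 with ((u2 ^ 3 + 2 * h * u2 ^ 2 + k * u2 - L ^ 2) - (u1 ^ 3 + 2 * h * u1 ^ 2 + k * u1 - L ^ 2)) by lra. ring. }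
      destruct (Rmult_integral _ _ E) as [E'|E']; [lra|exact E']. }
    assert (D13 : u1^2+u1*u3+u3^2 + 2*h*(u1+u3) + k = 0).
    { assert (E : (u3-u1)*(u1^2+u1*u3+u3^2 + 2*h*(u1+u3) + k) = 0).
      { replace 0 with ((u3 ^ 3 + 2 * h * u3 ^ 2 + k * u3 - L ^ 2) - (u1 ^ 3 + 2 * h * u1 ^ 2 + k * u1 - L ^ 2)) by lra. ring. }
      destruct (Rmult_integral _ _ E) as [E'|E']; [lra|exact E']. }
    assert (V1 : u1+u2+u3 = -2*h).
    { assert (E : (u3-u2)*(u1+u2+u3+2*h) = 0).
      { replace 0 with ((u1^2+u1*u3+u3^2 + 2*h*(u1+u3) + k) - (u1^2+u1*u2+u2^2 + 2*h*(u1+u2) + k)) by lra. ring. }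
      destruct (Rmult_integral _ _ E) as [E'|E']; lra. }
    assert (hE : h = -(u1+u2+u3)/2) by lra.
    assert (V2 : k = u1*u2+u1*u3+u2*u3).
    { rewrite hE in D12. lra. }
    assert (V3 : L^2 = u1*u2*u3).
    { rewrite hE, V2 in R1. lra. }
    assert (FF : forall u, u ^ 3 + 2 * h * u ^ 2 + k * u - L ^ 2 = (u-u1)*(u-u2)*(u-u3)).
    { intro u. assert (h2 : 2*h = -(u1+u2+u3)) by lra. rewrite h2, V2, V3. ring. }
    assert (PP : forall u, 2*u^3+2*h*u^2+L^2 = u*((u-u1)*(u-u2)+(u-u1)*(u-u3)+(u-u2)*(u-u3)) - (u-u1)*(u-u2)*(u-u3)).
    { intro u. assert (h2 : 2*h = -(u1+u2+u3)) by lra. rewrite h2, V3. ring. }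
    assert (A1 : 0 < (u1-s1)*(u1-s2)).
    { assert (X : 0 < 2*(u1-s1)*(u1-s2)*(u1+s1+s2+h)).
      { rewrite <- PF, PP. replace (u1 * ((u1 - u1) * (u1 - u2) + (u1 - u1) * (u1 - u3) + (u1 - u2) * (u1 - u3)) - (u1 - u1) * (u1 - u2) * (u1 - u3))
          with (u1 * ((u2 - u1) * (u3 - u1))) by ring.
        apply Rmult_lt_0_compat; [lra|]. apply Rmult_lt_0_compat; lra. }
      assert (0 < u1+s1+s2+h) by lra. nra. }
    assert (A2 : (u2-s1)*(u2-s2) < 0).
    { assert (X : 2*(u2-s1)*(u2-s2)*(u2+s1+s2+h) < 0).
      { rewrite <- PF, PP. replace (u2 * ((u2 - u1) * (u2 - u2) + (u2 - u1) * (u2 - u3) + (u2 - u2) * (u2 - u3)) - (u2 - u1) * (u2 - u2) * (u2 - u3))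
          with (- (u2 * ((u2 - u1) * (u3 - u2)))) by ring.
        apply Ropp_lt_gt_0_contravar.
        apply Rmult_lt_0_compat; [lra|]. apply Rmult_lt_0_compat; lra. }
      assert (0 < u2+s1+s2+h) by lra. nra. }
    assert (A3 : 0 < (u3-s1)*(u3-s2)).
    { assert (X : 0 < 2*(u3-s1)*(u3-s2)*(u3+s1+s2+h)).
      { rewrite <- PF, PP. replace (u3 * ((u3 - u1) * (u3 - u2) + (u3 - u1) * (u3 - u3) + (u3 - u2) * (u3 - u3)) - (u3 - u1) * (u3 - u2) * (u3 - u3))
          with (u3 * ((u3 - u1) * (u3 - u2))) by ring.
        apply Rmult_lt_0_compat; [lra|]. apply Rmult_lt_0_compat; lra. }
      assert (0 < u3+s1+s2+h) by lra. nra. }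
    assert (B2 : s1 < u2 < s2).
    { split; destruct (Rle_or_lt u2 s1); destruct (Rle_or_lt s2 u2); try lra; nra. }
    assert (B1 : u1 < s1).
    { destruct (Rle_or_lt s1 u1); [|lra]. nra. }
    assert (B3 : s2 < u3).
    { destruct (Rle_or_lt u3 s2); [|lra]. nra. }
    assert (G1 : 0 < fcubic L h c s1).
    { unfold fcubic. fold k. rewrite FF.
      replace ((s1 - u1) * (s1 - u2) * (s1 - u3)) with ((s1-u1)*((u2-s1)*(u3-s1))) by ring.
      apply Rmult_lt_0_compat; [lra|]. apply Rmult_lt_0_compat; lra. }
    assert (G2 : fcubic L h c s2 < 0).
    { unfold fcubic. fold k. rewrite FF.
      replace ((s2 - u1) * (s2 - u2) * (s2 - u3)) with (-((s2-u1)*((s2-u2)*(u3-s2)))) by ring.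
      apply Ropp_lt_gt_0_contravar.
      apply Rmult_lt_0_compat; [lra|]. apply Rmult_lt_0_compat; lra. }
    rewrite F1 in G1. rewrite F2 in G2. split; nra.
  - intros [Hc1 Hc2].
    assert (G1 : 0 < fcubic L h c s1) by (rewrite F1; apply Rmult_lt_0_compat; lra).
    assert (G2 : fcubic L h c s2 < 0).
    { rewrite F2. assert (0 < 2*s2*(Cxi_of L s2 - c)) by (apply Rmult_lt_0_compat; lra). lra. }
    assert (G0 : fcubic L h c 0 < 0) by (unfold fcubic; ring_simplify; lra).
    set (M := 1 + s2 + 2*Rabs h + Rabs (2*(c+1)) + L^2).
    assert (GM : 0 < fcubic L h c M).
    { unfold fcubic.
      assert (Ha := Rabs_pos h). assert (Hb := Rabs_pos (2*(c+1))).
      assert (Hh := Rle_abs (-h)). rewrite Rabs_Ropp in Hh.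
      assert (Hk := Rle_abs (-(2*(c+1)))). rewrite Rabs_Ropp in Hk.
      assert (HM1 : 1 <= M) by (unfold M; lra).
      assert (HMh : M - 2*Rabs h >= 1 + Rabs (2*(c+1)) + L^2) by (unfold M; lra).
      assert (T1 : M^3 + 2*h*M^2 >= M^2*(M - 2*Rabs h)) by nra.
      assert (T2 : M^2*(M - 2*Rabs h) >= M^2*(1 + Rabs (2*(c+1)) + L^2)) by nra.
      assert (T3 : 2*(c+1)*M >= - Rabs (2*(c+1)) * M) by nra.
      assert (T4 : M^2 >= M) by nra.
      nra. }
    assert (HsM : s2 < M).
    { unfold M. assert (Ha := Rabs_pos h). assert (Hb := Rabs_pos (2*(c+1))). lra. }
    destruct (ivt_up _ 0 s1 (fcont L h c) Hs1 G0 G1) as [z1 [Z1 R1]].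
    destruct (ivt_down _ s1 s2 (fcont L h c) H12 G1 G2) as [z2 [Z2 R2]].
    destruct (ivt_up _ s2 M (fcont L h c) HsM G2 GM) as [z3 [Z3 R3]].
    exists z1, z2, z3. repeat split; try lra; assumption.
Qed.
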